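(* Let $j,k$ be natural numbers with $0<j<k$ and let $a_0,a_1,a_2,b_0,b_1,b_2$ be real numbers with $a_1+a_2=0$ and $b_1+b_2=0$ (equivalently $A(0)=A(1)$ and $B(0)=B(1)$ for $A(t)=a_0+a_1t^j+a_2t^k$, $B(t)=b_0+b_1t^j+b_2t^k$). Consider the Abel equation $$\frac{dx}{dt}=(a_0+a_1t^j+a_2t^k)x^3+(b_0+b_1t^j+b_2t^k)x^2,\qquad t\in[0,1],$$ and assume it does not have a center at $x=0$. Then it has at most one non-zero periodic orbit, and when this periodic orbit exists it is hyperbolic.
   Context: A periodic orbit is a solution $x(t)$ defined on all of $[0,1]$ with $x(0)=x(1)$; $x\equiv0$ is always one, and non-zero periodic orbits are the others. The Poincaré map is $\Pi(x_0)=x(1;x_0)$ where $x(t;x_0)$ is the solution with $x(0;x_0)=x_0$; a periodic orbit with initial condition $x_0$ is hyperbolic if $\Pi'(x_0)\ne1$. The equation has a center at $x=0$ if there is a neighborhood of $0$ such that every solution starting at $t=0$ in this neighborhood is a periodic orbit. *)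

(* Defs.v *)
From Stdlib Require Import Reals.
From Coquelicot Require Import Coquelicot.
Open Scope R_scope.

Definition rhs := R -> R -> R.

(* x is a solution of dx/dt = F(t,x) on [0,1]: at every t in [0,1], x is
   differentiable with derivative F t (x t).  (Two-sided derivatives at the
   endpoints: any solution on [0,1] extends slightly beyond [0,1] since F is
   smooth, so this is equivalent to the one-sided version.) *)
Definition is_solution (F : rhs) (x : R -> R) : Prop :=
  forall t, 0 <= t <= 1 -> is_derive x t (F t (x t)).

Definition periodic_orbit (F : rhs) (x : R -> R) : Prop :=
  is_solution F x /\ x 0 = x 1.

(* Graph of the Poincaré map: Pi(x0) = y iff the solution starting at x0
   at t = 0 is defined on [0,1] and x(1) = y. *)
Definition poincare_rel (F : rhs) (x0 y : R) : Prop :=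
  exists x, is_solution F x /\ x 0 = x0 /\ x 1 = y.

Definition hyperbolic (F : rhs) (x0 : R) : Prop :=
  exists (P : R -> R) (d : R), 0 < d /\
    (forall z, Rabs (z - x0) < d -> poincare_rel F z (P z)) /\
    exists l, is_derive P x0 l /\ l <> 1.

Definition has_center (F : rhs) : Prop :=
  exists d, 0 < d /\
    forall z, Rabs z < d ->
      (exists x, is_solution F x /\ x 0 = z) /\
      (forall x, is_solution F x -> x 0 = z -> x 1 = z).

Definition abel_rhs (j k : nat) (a0 a1 a2 b0 b1 b2 : R) : rhs :=
  fun t x => (a0 + a1 * t ^ j + a2 * t ^ k) * x ^ 3
           + (b0 + b1 * t ^ j + b2 * t ^ k) * x ^ 2.

(* Main.v *)
Require Import Defs.
From Stdlib Require Import Reals.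
From Coquelicot Require Import Coquelicot.
From Stdlib Require Import Lra Lia Psatz ClassicalEpsilon Classical_Prop Classical_Pred_Type.
Open Scope R_scope.

Lemma cont_eps (f : R -> R) x :
  (forall eps, 0 < eps -> exists d, 0 < d /\ forall y, Rabs (y - x) < d -> Rabs (f y - f x) < eps) ->
  continuous f x.
Proof.
  intros H. apply continuity_pt_filterlim.
  unfold continuity_pt, continue_in, limit1_in, limit_in. simpl. unfold R_dist.
  intros eps Heps. destruct (H eps Heps) as [d [Hd Hy]]. exists d; split; auto.
  intros y [_ Hy']. apply Hy; auto.
Qed.

Lemma eps_cont (f : R -> R) x : continuous f x ->
  forall eps, 0 < eps -> exists d, 0 < d /\ forall y, Rabs (y - x) < d -> Rabs (f y - f x) < eps.
Proof.
  intros H. apply continuity_pt_filterlim in H.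
  unfold continuity_pt, continue_in, limit1_in, limit_in in H. simpl in H. unfold R_dist in H.
  intros eps Heps. destruct (H eps Heps) as [d [Hd Hy]]. exists d; split; auto.
  intros y Hy'. destruct (Req_dec y x) as [->|Hne].
  - rewrite Rminus_eq_0, Rabs_R0; auto.
  - apply Hy. split; auto. unfold D_x, no_cond; split; auto.
Qed.

Lemma derive_cont (f : R -> R) t l : is_derive f t l -> continuous f t.
Proof. intros H. apply (ex_derive_continuous (K:=R_AbsRing) (V:=R_NormedModule) f t). exists l; exact H. Qed.

Lemma derive_contpt (f : R -> R) t l : is_derive f t l -> continuity_pt f t.
Proof. intros H. apply continuity_pt_filterlim. apply (derive_cont f t l H). Qed.

Lemma is_derive_ext' (f g : R -> R) x l l' : (forall t, f t = g t) -> l = l' ->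
  is_derive f x l -> is_derive g x l'.
Proof. intros H1 H2 H3. subst l'. eapply is_derive_ext; eauto. Qed.

Ltac rsimpl := unfold minus, plus, opp, scal, mult, one, zero; simpl; unfold mult, plus, opp; simpl.

Lemma deriv_nonpos_mono (f df : R -> R) a b : a <= b ->
  (forall t, a <= t <= b -> is_derive f t (df t)) ->
  (forall t, a <= t <= b -> df t <= 0) -> f b <= f a.
Proof.
  intros Hab Hd Hs.
  destruct (MVT_gen f a b df) as [c [Hc Heq]].
  - intros x Hx. rewrite Rmin_left in Hx by lra. rewrite Rmax_right in Hx by lra. apply Hd; lra.
  - intros x Hx. rewrite Rmin_left in Hx by lra. rewrite Rmax_right in Hx by lra.
    apply (derive_contpt f x (df x)). apply Hd; lra.
  - rewrite Rmin_left in Hc by lra. rewrite Rmax_right in Hc by lra.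
    assert (df c <= 0) by (apply Hs; lra). nra.
Qed.

Lemma deriv_pos_strict (f df : R -> R) a b : a < b ->
  (forall t, a <= t <= b -> is_derive f t (df t)) ->
  (forall t, a <= t <= b -> 0 < df t) -> f a < f b.
Proof.
  intros Hab Hd Hs.
  destruct (MVT_gen f a b df) as [c [Hc Heq]].
  - intros x Hx. rewrite Rmin_left in Hx by lra. rewrite Rmax_right in Hx by lra. apply Hd; lra.
  - intros x Hx. rewrite Rmin_left in Hx by lra. rewrite Rmax_right in Hx by lra.
    apply (derive_contpt f x (df x)). apply Hd; lra.
  - rewrite Rmin_left in Hc by lra. rewrite Rmax_right in Hc by lra.
    assert (0 < df c) by (apply Hs; lra). nra.
Qed.

Lemma deriv_zero_const (f df : R -> R) a b : a <= b ->
  (forall t, a <= t <= b -> is_derive f t (df t)) ->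
  (forall t, a <= t <= b -> df t = 0) -> f b = f a.
Proof.
  intros Hab Hd Hs.
  destruct (MVT_gen f a b df) as [c [Hc Heq]].
  - intros x Hx. rewrite Rmin_left in Hx by lra. rewrite Rmax_right in Hx by lra. apply Hd; lra.
  - intros x Hx. rewrite Rmin_left in Hx by lra. rewrite Rmax_right in Hx by lra.
    apply (derive_contpt f x (df x)). apply Hd; lra.
  - rewrite Rmin_left in Hc by lra. rewrite Rmax_right in Hc by lra.
    rewrite Hs in Heq by lra. lra.
Qed.

Lemma bound01 (x : R -> R) : (forall t, 0 <= t <= 1 -> continuity_pt x t) ->
  exists M, 0 <= M /\ forall t, 0 <= t <= 1 -> Rabs (x t) <= M.
Proof.
  intros Hc.
  destruct (continuity_ab_maj (fun t => Rabs (x t)) 0 1) as [m [Hm _]]; [lra| |].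
  - intros c Hc'. apply (continuity_pt_comp x Rabs). apply Hc; auto. apply Rcontinuity_abs.
  - exists (Rabs (x m)); split; [apply Rabs_pos|]. intros; apply Hm; auto.
Qed.

Definition loc_lip (F : rhs) := forall M, exists L, 0 < L /\
  forall t u v, 0 <= t <= 1 -> Rabs u <= M -> Rabs v <= M ->
    Rabs (F t u - F t v) <= L * Rabs (u - v).

Lemma sol_contpt F x : is_solution F x -> forall t, 0 <= t <= 1 -> continuity_pt x t.
Proof. intros H t Ht. eapply derive_contpt. apply H; auto. Qed.

Lemma uniqueness F x y t0 : loc_lip F -> is_solution F x -> is_solution F y ->
  0 <= t0 <= 1 -> x t0 = y t0 -> forall t, 0 <= t <= 1 -> x t = y t.
Proof.
  intros HL Hx Hy Ht0 Heq t Ht.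
  destruct (bound01 x (sol_contpt F x Hx)) as [Mx [_ HMx]].
  destruct (bound01 y (sol_contpt F y Hy)) as [My [_ HMy]].
  destruct (HL (Rmax Mx My)) as [L [HL0 HLL]].
  set (w := fun s => (x s - y s) ^ 2).
  set (dw := fun s => 2 * (x s - y s) * (F s (x s) - F s (y s))).
  assert (Hdw : forall s, 0 <= s <= 1 -> is_derive w s (dw s)).
  { intros s Hs. unfold w, dw.
    assert (H1 := is_derive_minus x y s _ _ (Hx s Hs) (Hy s Hs)).
    assert (H2 := is_derive_pow _ 2 s _ H1).
    eapply is_derive_ext'; [| |apply H2]; intros; rsimpl; ring.
    }
  assert (Hb : forall s, 0 <= s <= 1 -> Rabs (dw s) <= 2 * L * w s).
  { intros s Hs. unfold dw, w.
    assert (Hl := HLL s (x s) (y s) Hs).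
    assert (Rabs (x s) <= Rmax Mx My) by (eapply Rle_trans; [apply HMx; auto| apply Rmax_l]).
    assert (Rabs (y s) <= Rmax Mx My) by (eapply Rle_trans; [apply HMy; auto| apply Rmax_r]).
    specialize (Hl H H0).
    rewrite !Rabs_mult. rewrite (Rabs_right 2) by lra.
    assert (Rabs (x s - y s) * Rabs (x s - y s) = (x s - y s)^2).
    { rewrite <- Rabs_mult. simpl. rewrite Rmult_1_r. apply Rabs_right. apply Rle_ge. apply Rle_0_sqr. }
    assert (0 <= Rabs (x s - y s)) by apply Rabs_pos.
    nra. }
  assert (Hw0 : w t0 = 0) by (unfold w; rewrite Heq; ring).
  assert (Hwt : w t = 0).
  { destruct (Rle_dec t0 t) as [Hle|Hle].
    - set (f1 := fun s => exp (-(2*L) * s) * w s).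
      assert (f1 t <= f1 t0).
      { apply (deriv_nonpos_mono f1 (fun s => exp (-(2*L)*s) * (-(2*L)) * w s + exp (-(2*L)*s) * dw s)); auto.
        - intros s Hs. unfold f1.
          assert (He : is_derive (fun s => exp (-(2*L)*s)) s (exp (-(2*L)*s) * (-(2*L)))).
          { assert (Hl : is_derive (fun s : R => -(2*L)*s) s (-(2*L))).
            { eapply is_derive_ext'; [| |apply (is_derive_scal (fun s => s) s (-(2*L)) 1 (is_derive_id s))]; intros; rsimpl; ring. }
            assert (Hc := is_derive_comp exp (fun s => -(2*L)*s) s _ _ (is_derive_exp _) Hl).
            eapply is_derive_ext'; [| |apply Hc]; intros; rsimpl; ring. }
          assert (Hm := is_derive_mult _ _ s _ _ He (Hdw s ltac:(lra)) Rmult_comm).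
          eapply is_derive_ext'; [| |apply Hm]; intros; rsimpl; ring.
        - intros s Hs. specialize (Hb s ltac:(lra)). assert (0 < exp (-(2*L)*s)) by apply exp_pos.
          apply Rabs_le_between in Hb. nra. }
      unfold f1 in H. rewrite Hw0 in H. assert (0 < exp (-(2*L)*t)) by apply exp_pos.
      assert (0 <= w t) by (unfold w; apply pow2_ge_0). nra.
    - set (f2 := fun s => - (exp ((2*L) * s) * w s)).
      assert (f2 t0 <= f2 t).
      { apply (deriv_nonpos_mono f2 (fun s => - (exp ((2*L)*s) * (2*L) * w s + exp ((2*L)*s) * dw s))); try lra.
        - intros s Hs. unfold f2.
          assert (He : is_derive (fun s => exp ((2*L)*s)) s (exp ((2*L)*s) * (2*L))).
          { assert (Hl : is_derive (fun s : R => (2*L)*s) s (2*L)).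
            { eapply is_derive_ext'; [| |apply (is_derive_scal (fun s => s) s (2*L) 1 (is_derive_id s))]; intros; rsimpl; ring. }
            assert (Hc := is_derive_comp exp (fun s => (2*L)*s) s _ _ (is_derive_exp _) Hl).
            eapply is_derive_ext'; [| |apply Hc]; intros; rsimpl; ring. }
          assert (Hm := is_derive_mult _ _ s _ _ He (Hdw s ltac:(lra)) Rmult_comm).
          assert (Ho := is_derive_opp _ _ _ Hm).
          eapply is_derive_ext'; [| |apply Ho]; intros; rsimpl; ring.
        - intros s Hs. specialize (Hb s ltac:(lra)). assert (0 < exp ((2*L)*s)) by apply exp_pos.
          apply Rabs_le_between in Hb. nra. }
      unfold f2 in H. rewrite Hw0 in H. assert (0 < exp ((2*L)*t)) by apply exp_pos.
      assert (0 <= w t) by (unfold w; apply pow2_ge_0). nra. }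
  unfold w in Hwt. nra.
Qed.

Definition clamp t := Rmax 0 (Rmin 1 t).

Lemma clamp_in t : 0 <= clamp t <= 1.
Proof. unfold clamp, Rmax, Rmin; repeat destruct Rle_dec; lra. Qed.
Lemma clamp_id t : 0 <= t <= 1 -> clamp t = t.
Proof. unfold clamp, Rmax, Rmin; repeat destruct Rle_dec; lra. Qed.
Lemma clamp_lip a b : Rabs (clamp a - clamp b) <= Rabs (a - b).
Proof. unfold clamp, Rmax, Rmin; repeat destruct Rle_dec; unfold Rabs; repeat destruct Rcase_abs; lra. Qed.
Lemma clamp_cont t : continuous clamp t.
Proof.
  apply cont_eps. intros eps He. exists eps; split; auto. intros y Hy.
  eapply Rle_lt_trans; [apply clamp_lip|auto].
Qed.

Definition F_cont (F : rhs) := forall h t, continuous h t -> continuous (fun s => F s (h s)) t.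

Lemma RInt_deriv (g : R -> R) a u : (forall s, continuous g s) ->
  is_derive (fun u => RInt g a u) u (g u).
Proof.
  intros Hg. apply (is_derive_RInt g (fun u => RInt g a u) a u).
  - apply filter_forall. intros b. apply (RInt_correct (V:=R_CompleteNormedModule)). apply (ex_RInt_continuous (V:=R_CompleteNormedModule)). intros; apply Hg.
  - apply Hg.
Qed.

Lemma RInt_cont (g : R -> R) a u : (forall s, continuous g s) -> continuous (fun u => RInt g a u) u.
Proof. intros Hg. eapply derive_cont. apply RInt_deriv; auto. Qed.

Lemma exRI (f : R -> R) a b : (forall z, Rmin a b <= z <= Rmax a b -> continuous f z) -> ex_RInt f a b.
Proof. apply (ex_RInt_continuous (V:=R_CompleteNormedModule)). Qed.
Lemma exRI' (f : R -> R) a b : (forall z, continuous f z) -> ex_RInt f a b.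
Proof. intros H; apply exRI; intros; apply H. Qed.
Lemma RInt_minus' (f g : R -> R) a b : ex_RInt f a b -> ex_RInt g a b ->
  RInt (fun x => f x - g x) a b = RInt f a b - RInt g a b.
Proof. intros. apply (RInt_minus (V:=R_CompleteNormedModule)); auto. Qed.

Lemma RInt_diff_bound (g1 g2 b : R -> R) c : 0 <= c ->
  (forall s, continuous g1 s) -> (forall s, continuous g2 s) -> (forall s, continuous b s) ->
  (forall s, 0 <= s <= c -> Rabs (g1 s - g2 s) <= b s) ->
  Rabs (RInt g1 0 c - RInt g2 0 c) <= RInt b 0 c.
Proof.
  intros Hc H1 H2 Hb Hle.
  assert (E1 : ex_RInt g1 0 c) by (apply exRI'; auto).
  assert (E2 : ex_RInt g2 0 c) by (apply exRI'; auto).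
  rewrite <- RInt_minus' by auto.
  assert (Hc1 : forall s, continuous (fun x => g1 x - g2 x) s).
  { intros s. apply (continuous_minus (V:=R_NormedModule)); auto. }
  eapply Rle_trans. apply abs_RInt_le; auto. apply exRI'; auto.
  apply RInt_le; auto.
  - apply exRI'. intros s. apply (continuous_comp _ Rabs). apply Hc1. apply continuous_Rabs.
  - apply exRI'; auto.
  - intros; apply Hle; lra.
Qed.

Lemma le_eps a b : (forall e, 0 < e -> a <= b + e) -> a <= b.
Proof.
  intros H. destruct (Rle_dec a b) as [|Hn]; auto.
  specialize (H ((a - b)/2) ltac:(lra)). lra.
Qed.

Lemma exp_le x y : x <= y -> exp x <= exp y.
Proof. intros [H|H]; [left; apply exp_increasing; auto| subst; lra]. Qed.

Lemma q_pos n : 0 < (/2)^n.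
Proof. apply pow_lt. lra. Qed.

Lemma geo_small D e : 0 <= D -> 0 < e -> exists N, forall n, (N <= n)%nat -> D * (/2)^n < e.
Proof.
  intros HD He.
  destruct (pow_lt_1_zero (/2) ltac:(rewrite Rabs_right; lra) (e / (D+1)) ltac:(apply Rdiv_lt_0_compat; lra)) as [N HN].
  exists N. intros n Hn. specialize (HN n Hn). rewrite Rabs_right in HN by (left; apply q_pos).
  assert (Hq := q_pos n).
  apply (Rmult_lt_compat_l (D+1)) in HN; [|lra].
  replace ((D+1) * (e/(D+1))) with e in HN by (field; lra). nra.
Qed.

Fixpoint picard (F : rhs) (X : R -> R) (z z0 : R) (n : nat) : R -> R :=
  match n with
  | O => fun t => X t + (z - z0)
  | S n => fun t => z + RInt (fun s => F s (picard F X z z0 n s)) 0 (clamp t)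
  end.

Lemma exp_RInt_bound L a c : 0 < L -> 0 <= c ->
  RInt (fun s => L * (a * exp (2*L*s))) 0 c = a * (exp (2*L*c) - 1) / 2.
Proof.
  intros HL Hc.
  apply is_RInt_unique.
  assert (H := is_RInt_derive (V:=R_CompleteNormedModule) (fun s => a * exp (2*L*s) / 2) (fun s => L * (a * exp (2*L*s))) 0 c).
  replace (a * (exp (2*L*c) - 1) / 2) with (minus (a * exp (2*L*c) / 2) (a * exp (2*L*0) / 2)).
  2:{ rsimpl. rewrite Rmult_0_r, exp_0. field. }
  apply H.
  - intros x _. auto_derive; auto. field.
  - intros x _. apply (derive_cont _ x (L * (a * (2*L*exp (2*L*x))))). auto_derive; auto. ring.
Qed.

Lemma existence (F : rhs) : F_cont F -> loc_lip F -> forall x0, is_solution F x0 ->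
  exists d C, 0 < d /\ 0 <= C /\ forall z, Rabs (z - x0 0) < d ->
   exists x, is_solution F x /\ x 0 = z /\
     forall t, 0 <= t <= 1 -> Rabs (x t - x0 t) <= C * Rabs (z - x0 0).
Proof.
  intros HFc HFl x0 Hx0.
  set (X := fun t => x0 (clamp t)).
  assert (HXc : forall t, continuous X t).
  { intros t. unfold X. apply (continuous_comp clamp x0). apply clamp_cont.
    eapply derive_cont. apply Hx0. apply clamp_in. }
  destruct (bound01 x0 (sol_contpt F x0 Hx0)) as [M0 [HM0 HM0b]].
  assert (HXb : forall t, Rabs (X t) <= M0) by (intros t; apply HM0b, clamp_in).
  destruct (HFl (M0 + 1)) as [L [HL HLL]].
  set (K := exp (2*L)).
  assert (HK : 1 <= K) by (unfold K; assert (H := exp_ineq1_le (2*L)); lra).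
  set (C := 1 + 2*L*K).
  assert (HC : 1 <= C) by (unfold C; nra).
  exists (/C), C. split; [apply Rinv_0_lt_compat; lra|]. split; [lra|].
  intros z Hz. set (z0 := x0 0) in *. set (eps := Rabs (z - z0)).
  assert (Heps0 : 0 <= eps) by apply Rabs_pos.
  assert (HepsC : eps * C <= 1).
  { apply (Rmult_le_reg_r (/C)). apply Rinv_0_lt_compat; lra.
    rewrite Rmult_assoc, Rinv_r by lra. rewrite Rmult_1_r, Rmult_1_l. left; exact Hz. }
  assert (HXint : forall t, 0 <= t <= 1 -> x0 t = z0 + RInt (fun s => F s (X s)) 0 t).
  { intros t Ht.
    assert (H := is_RInt_derive (V:=R_CompleteNormedModule) x0 (fun s => F s (x0 s)) 0 t).
    rewrite Rmin_left, Rmax_right in H by lra.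
    assert (H' : is_RInt (fun s => F s (x0 s)) 0 t (minus (x0 t) (x0 0))).
    { apply H. intros s Hs; apply Hx0; lra.
      intros s Hs. apply HFc. eapply derive_cont. apply Hx0; lra. }
    apply (is_RInt_ext _ (fun s => F s (X s))) in H'.
    2:{ intros s Hs. rewrite Rmin_left, Rmax_right in Hs by lra. unfold X. rewrite clamp_id by lra. auto. }
    apply (is_RInt_unique (V:=R_CompleteNormedModule)) in H'. rewrite H'. unfold z0. rsimpl. ring. }
  set (phi := picard F X z z0).
  assert (Hcont : forall n t, continuous (phi n) t).
  { induction n; intros t; simpl.
    - apply (continuous_plus (V:=R_NormedModule)); auto. apply continuous_const.
    - apply (continuous_plus (V:=R_NormedModule)). apply continuous_const.
      apply (continuous_comp clamp (fun u => RInt (fun s => F s (phi n s)) 0 u)).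
      apply clamp_cont. apply RInt_cont. intros s; apply HFc; auto. }
  assert (Heps1 : eps <= 1) by nra.
  assert (Htube : forall n t, Rabs (phi n t - X t) <= eps + 2*L*eps*K*(1 - (/2)^n) -> Rabs (phi n t) <= M0 + 1).
  { intros n t H. assert (Hq := q_pos n). assert (Hq1 : (/2)^n <= 1).
    { rewrite <- (pow1 n). apply pow_incr. lra. }
    assert (HXt := HXb t). apply Rabs_le_between in H. apply Rabs_le_between in HXt.
    apply Rabs_le_between. unfold C in HepsC. split; nra. }
  assert (HXeq : forall t, X t = z0 + RInt (fun s => F s (X s)) 0 (clamp t)).
  { intros t. unfold X at 1. apply HXint, clamp_in. }
  assert (INV : forall n, (forall t, Rabs (phi n t - X t) <= eps + 2*L*eps*K*(1 - (/2)^n)) /\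
     (forall t, Rabs (phi (S n) t - phi n t) <= L*eps*exp(2*L*clamp t)*(/2)^n)).
  { induction n as [|n [IH1 IH2]].
    - split.
      + intros t. unfold phi; simpl. replace (X t + (z - z0) - X t) with (z - z0) by ring. fold eps. lra.
      + intros t. unfold phi; simpl. rewrite (HXeq t).
        replace (z + RInt (fun s : R => F s (X s + (z - z0))) 0 (clamp t) - (z0 + RInt (fun s : R => F s (X s)) 0 (clamp t) + (z - z0)))
          with (RInt (fun s : R => F s (X s + (z - z0))) 0 (clamp t) - RInt (fun s : R => F s (X s)) 0 (clamp t)) by ring.
        assert (Hc := clamp_in t).
        eapply Rle_trans. apply (RInt_diff_bound _ _ (fun _ => L * eps)). lra.
        * intros s. apply HFc. apply (continuous_plus (V:=R_NormedModule)); auto. apply continuous_const.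
        * intros s. apply HFc. auto.
        * intros s. apply continuous_const.
        * intros s Hs. replace eps with (Rabs ((X s + (z - z0)) - X s)) by (unfold eps; f_equal; ring).
          apply HLL. lra. { assert (HXs := HXb s). eapply Rle_trans. apply Rabs_triang. fold eps. lra. } { assert (HXs := HXb s). lra. }
        * rewrite RInt_const. rsimpl. assert (H1 := exp_ineq1_le (2 * L * clamp t)).
          assert (0 <= L*eps) by nra. assert (H2: (clamp t - 0)*(L*eps) <= L*eps) by nra. assert (H3 : L*eps*1 <= L*eps*exp (2 * L * clamp t)) by (apply Rmult_le_compat_l; nra). lra.
    - split.
      + intros t. assert (Hq := q_pos n). assert (He := exp_le (2*L*clamp t) (2*L) ltac:(assert (H := clamp_in t); nra)).
        fold K in He. specialize (IH1 t). specialize (IH2 t).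
        replace (phi (S n) t - X t) with ((phi (S n) t - phi n t) + (phi n t - X t)) by ring.
        eapply Rle_trans. apply Rabs_triang. simpl.
        assert (L*eps*exp(2*L*clamp t)*(/2)^n <= L*eps*K*(/2)^n).
        { apply Rmult_le_compat_r; [lra|]. apply Rmult_le_compat_l; nra. }
        lra.
      + intros t. change (phi (S (S n)) t) with (z + RInt (fun s => F s (phi (S n) s)) 0 (clamp t)).
        change (phi (S n) t) with (z + RInt (fun s => F s (phi n s)) 0 (clamp t)).
        replace (z + RInt (fun s => F s (phi (S n) s)) 0 (clamp t) - (z + RInt (fun s => F s (phi n s)) 0 (clamp t)))
          with (RInt (fun s => F s (phi (S n) s)) 0 (clamp t) - RInt (fun s => F s (phi n s)) 0 (clamp t)) by ring.
        assert (Hc := clamp_in t).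
        assert (IH1' : forall t, Rabs (phi (S n) t - X t) <= eps + 2*L*eps*K*(1 - (/2)^(S n))).
        { intros t'. assert (Hq := q_pos n). assert (He := exp_le (2*L*clamp t') (2*L) ltac:(assert (H := clamp_in t'); nra)).
          fold K in He. specialize (IH1 t'). specialize (IH2 t').
          replace (phi (S n) t' - X t') with ((phi (S n) t' - phi n t') + (phi n t' - X t')) by ring.
          eapply Rle_trans. apply Rabs_triang. simpl.
          assert (L*eps*exp(2*L*clamp t')*(/2)^n <= L*eps*K*(/2)^n).
          { apply Rmult_le_compat_r; [lra|]. apply Rmult_le_compat_l; nra. }
          lra. }
        eapply Rle_trans. apply (RInt_diff_bound _ _ (fun s => L * ((L*eps*(/2)^n) * exp (2*L*s)))). lra.
        * intros s. apply HFc. auto.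
        * intros s. apply HFc. auto.
        * intros s. apply (derive_cont _ s (L * ((L*eps*(/2)^n) * (2*L*exp (2*L*s))))). auto_derive; auto. ring.
        * intros s Hs. eapply Rle_trans. apply HLL. lra. apply (Htube (S n)). apply IH1'. apply (Htube n). apply IH1.
          specialize (IH2 s). rewrite clamp_id in IH2 by lra.
          apply Rmult_le_compat_l. lra. lra.
        * rewrite exp_RInt_bound by lra. simpl. assert (Hq := q_pos n).
          assert (0 < exp (2 * L * clamp t)) by apply exp_pos. assert (0 <= L*eps*(/2)^n) by (apply Rmult_le_pos; nra). unfold Rdiv. nra. }
  assert (HeK : forall t, exp (2*L*clamp t) <= K).
  { intros t. apply exp_le. assert (H := clamp_in t). nra. }
  set (D := 2*L*eps*K).
  assert (HD : 0 <= D) by (unfold D; apply Rmult_le_pos; [apply Rmult_le_pos|]; nra).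
  assert (HCau : forall k n t, Rabs (phi (n+k)%nat t - phi n t) <= D*((/2)^n - (/2)^(n+k))).
  { induction k; intros n t.
    - rewrite Nat.add_0_r. rewrite Rminus_eq_0, Rabs_R0. lra.
    - rewrite Nat.add_succ_r.
      replace (phi (S (n+k)) t - phi n t) with ((phi (S (n+k)) t - phi (n+k)%nat t) + (phi (n+k)%nat t - phi n t)) by ring.
      eapply Rle_trans. apply Rabs_triang.
      destruct (INV (n+k)%nat) as [_ H2]. specialize (H2 t). specialize (IHk n t).
      assert (Hq := q_pos (n+k)). assert (HeK' := HeK t).
      assert (L*eps*exp(2*L*clamp t)*(/2)^(n+k) <= L*eps*K*(/2)^(n+k)).
      { apply Rmult_le_compat_r; [lra|]. apply Rmult_le_compat_l; nra. }
      simpl. unfold D in *. nra. }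
  assert (HCau' : forall m n t, (n <= m)%nat -> Rabs (phi m t - phi n t) <= D*(/2)^n).
  { intros m n t Hnm. replace m with (n + (m - n))%nat by lia.
    eapply Rle_trans. apply HCau. assert (Hq := q_pos (n + (m-n))). nra. }
  assert (Hex : forall t, ex_finite_lim_seq (fun n => phi n t)).
  { intros t. apply ex_lim_seq_cauchy_corr. intros e.
    destruct (geo_small D e HD (cond_pos e)) as [N HN]. exists N. intros n m Hn Hm.
    destruct (Nat.le_ge_cases n m) as [Hnm|Hnm].
    - rewrite Rabs_minus_sym. eapply Rle_lt_trans. apply HCau'; auto. apply HN; auto.
    - eapply Rle_lt_trans. apply HCau'; auto. apply HN; auto. }
  set (phiinf := fun t => real (Lim_seq (fun n => phi n t))).
  assert (HT : forall n t, Rabs (phiinf t - phi n t) <= D * (/2)^n).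
  { intros n t. apply le_eps. intros e He.
    assert (Hl := Lim_seq_correct' _ (Hex t)). apply is_lim_seq_spec in Hl.
    destruct (Hl (mkposreal e He)) as [N HN]. simpl in HN.
    specialize (HN (Nat.max N n) (Nat.le_max_l _ _)).
    replace (phiinf t - phi n t) with ((phiinf t - phi (Nat.max N n) t) + (phi (Nat.max N n) t - phi n t)) by ring.
    eapply Rle_trans. apply Rabs_triang.
    assert (H2 := HCau' (Nat.max N n) n t (Nat.le_max_r _ _)).
    rewrite Rabs_minus_sym in HN. unfold phiinf in *. lra. }
  assert (Hcinf : forall t, continuous phiinf t).
  { intros t. apply continuity_pt_filterlim.
    apply (CVU_continuity phi phiinf t (mkposreal 1 Rlt_0_1)).
    - intros e He. destruct (geo_small D e HD He) as [N HN]. exists N. intros n y Hn _.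
      eapply Rle_lt_trans. apply HT. apply HN; auto.
    - intros n y _. apply continuity_pt_filterlim. apply Hcont.
    - unfold Boule. simpl. rewrite Rminus_eq_0, Rabs_R0. lra. }
  assert (Htinf : forall t, Rabs (phiinf t - X t) <= eps + D).
  { intros t. apply le_eps. intros e He. destruct (geo_small D e HD He) as [N HN].
    specialize (HN N (Nat.le_refl _)). destruct (INV N) as [H1 _]. specialize (H1 t).
    specialize (HT N t).
    replace (phiinf t - X t) with ((phiinf t - phi N t) + (phi N t - X t)) by ring.
    eapply Rle_trans. apply Rabs_triang. assert (Hq := q_pos N). unfold D in *. nra. }
  assert (Hbinf : forall t, Rabs (phiinf t) <= M0 + 1).
  { intros t. specialize (Htinf t). assert (HXt := HXb t). apply Rabs_le_between in Htinf.
    apply Rabs_le_between in HXt. apply Rabs_le_between. unfold D, C in *. split; nra. }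
  assert (Hfix : forall t, phiinf t = z + RInt (fun s => F s (phiinf s)) 0 (clamp t)).
  { intros t. set (R0 := phiinf t - (z + RInt (fun s => F s (phiinf s)) 0 (clamp t))).
    assert (HR : Rabs R0 <= 0).
    { apply le_eps. intros e He. destruct (geo_small ((1+L)*D) e ltac:(nra) He) as [N HN].
      specialize (HN N (Nat.le_refl _)).
      assert (E : phi (S N) t = z + RInt (fun s => F s (phi N s)) 0 (clamp t)) by reflexivity.
      replace R0 with ((phiinf t - phi (S N) t) + (RInt (fun s => F s (phi N s)) 0 (clamp t) - RInt (fun s => F s (phiinf s)) 0 (clamp t))) by (unfold R0; rewrite E; ring).
      eapply Rle_trans. apply Rabs_triang.
      assert (H1 := HT (S N) t). simpl in H1.
      assert (H2 : Rabs (RInt (fun s => F s (phi N s)) 0 (clamp t) - RInt (fun s => F s (phiinf s)) 0 (clamp t)) <= L * (D * (/2)^N)).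
      { eapply Rle_trans. apply (RInt_diff_bound _ _ (fun _ => L * (D * (/2)^N))). apply clamp_in.
        - intros s. apply HFc. auto.
        - intros s. apply HFc. auto.
        - intros s. apply continuous_const.
        - intros s Hs. assert (Hc := clamp_in t). eapply Rle_trans. apply HLL. lra.
          apply (Htube N). apply INV. apply Hbinf.
          apply Rmult_le_compat_l. lra. rewrite Rabs_minus_sym. apply HT.
        - rewrite RInt_const. rsimpl. assert (Hc := clamp_in t). assert (Hq := q_pos N).
          assert (0 <= L * (D * (/2)^N)) by (apply Rmult_le_pos; [lra|]; apply Rmult_le_pos; lra).
          nra. }
      assert (Hq := q_pos N). nra. }
    assert (HR' := Rabs_pos R0). assert (Rabs R0 = 0) by lra.
    apply Rabs_eq_0 in H. unfold R0 in H. lra. }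
  exists (fun t => z + RInt (fun s => F s (phiinf s)) 0 t).
  assert (Heq01 : forall t, 0 <= t <= 1 -> z + RInt (fun s => F s (phiinf s)) 0 t = phiinf t).
  { intros t Ht. rewrite (Hfix t). rewrite clamp_id by lra. reflexivity. }
  split; [|split].
  - intros t Ht. rewrite Heq01 by auto.
    assert (Hd := RInt_deriv (fun s => F s (phiinf s)) 0 t ltac:(intros s; apply HFc; auto)).
    assert (Hp := is_derive_plus (fun _ => z) _ t _ _ (is_derive_const z t) Hd).
    eapply is_derive_ext'; [| |apply Hp]; intros; rsimpl; ring.
  - rewrite RInt_point. rsimpl. ring.
  - intros t Ht. rewrite Heq01 by auto. specialize (Htinf t). unfold X in Htinf. rewrite clamp_id in Htinf by auto.
    fold eps. unfold D, C in *. lra.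
Qed.

Lemma clamp_comp_cont (x : R -> R) t : (forall s, 0 <= s <= 1 -> continuous x s) ->
  continuous (fun s => x (clamp s)) t.
Proof. intros H. apply (continuous_comp clamp x). apply clamp_cont. apply H, clamp_in. Qed.

Lemma sol_cont F x : is_solution F x -> forall s, 0 <= s <= 1 -> continuous x s.
Proof. intros H s Hs. eapply derive_cont. apply H; auto. Qed.

Definition Dq_cont (Dq : R -> R -> R -> R) := forall g h t, continuous g t -> continuous h t ->
  continuous (fun s => Dq s (g s) (h s)) t.

Lemma var_formula (F : rhs) Dq x0 x :
  (forall t u v, F t u - F t v = Dq t u v * (u - v)) -> Dq_cont Dq ->
  is_solution F x0 -> is_solution F x ->
  x 1 - x0 1 = (x 0 - x0 0) * exp (RInt (fun s => Dq s (x (clamp s)) (x0 (clamp s))) 0 1).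
Proof.
  intros HD1 HD2 Hx0 Hx.
  set (a := fun s => Dq s (x (clamp s)) (x0 (clamp s))).
  assert (Ha : forall s, continuous a s).
  { intros s. apply HD2; apply clamp_comp_cont; eapply sol_cont; eauto. }
  set (g := fun t => (x t - x0 t) * exp (- RInt a 0 t)).
  assert (Hg : g 1 = g 0).
  { apply (deriv_zero_const g (fun _ => 0) 0 1). lra.
    - intros t Ht. unfold g.
      assert (H1 := is_derive_minus x x0 t _ _ (Hx t Ht) (Hx0 t Ht)).
      assert (H2 := RInt_deriv a 0 t Ha).
      assert (H3 := is_derive_opp _ _ _ H2).
      assert (H4 := is_derive_comp exp (fun t => opp (RInt a 0 t)) t _ _ (is_derive_exp _) H3).
      assert (H5 := is_derive_mult _ _ t _ _ H1 H4 Rmult_comm).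
      eapply is_derive_ext'; [| |apply H5]; intros; rsimpl. reflexivity.
      unfold a. rewrite !clamp_id by lra. replace (F t (x t) + - F t (x0 t)) with (F t (x t) - F t (x0 t)) by ring. rewrite HD1. ring.
    - intros; reflexivity. }
  unfold g in Hg. rewrite RInt_point in Hg. unfold zero in Hg; simpl in Hg. rewrite Ropp_0, exp_0, Rmult_1_r in Hg.
  rewrite <- Hg. rewrite Rmult_assoc, <- exp_plus. replace (- RInt a 0 1 + RInt a 0 1) with 0 by ring.
  rewrite exp_0. ring.
Qed.

Definition Dq_lip (Dq : R -> R -> R -> R) := forall M, exists L, 0 < L /\
  forall t u v, 0 <= t <= 1 -> Rabs u <= M -> Rabs v <= M ->
    Rabs (Dq t u v - Dq t v v) <= L * Rabs (u - v).

Lemma poincare_deriv (F : rhs) Dq : F_cont F -> loc_lip F ->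
  (forall t u v, F t u - F t v = Dq t u v * (u - v)) -> Dq_cont Dq -> Dq_lip Dq ->
  forall x0, is_solution F x0 ->
  exists P d, 0 < d /\ (forall z, Rabs (z - x0 0) < d -> poincare_rel F z (P z)) /\
   is_derive P (x0 0) (exp (RInt (fun s => Dq s (x0 (clamp s)) (x0 (clamp s))) 0 1)).
Proof.
  intros HFc HFl HD1 HD2 HD3 x0 Hx0.
  destruct (existence F HFc HFl x0 Hx0) as [d [C [Hd [HC Hex]]]].
  destruct (bound01 x0 (sol_contpt F x0 Hx0)) as [M0 [HM0 HM0b]].
  destruct (HD3 (M0 + 1)) as [Lp [HLp HLpb]].
  set (z0 := x0 0) in *.
  set (Q := fun z y => exists x, is_solution F x /\ x 0 = z /\ x 1 = y /\
      forall t, 0 <= t <= 1 -> Rabs (x t - x0 t) <= C * Rabs (z - z0)).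
  set (P := fun z => epsilon (inhabits 0) (Q z)).
  assert (HP : forall z, Rabs (z - z0) < d -> Q z (P z)).
  { intros z Hz. unfold P. apply epsilon_spec. destruct (Hex z Hz) as [x [H1 [H2 H3]]].
    exists (x 1), x. auto. }
  exists P, d. split; auto. split.
  { intros z Hz. destruct (HP z Hz) as [x [H1 [H2 [H3 _]]]]. exists x; auto. }
  assert (HPz0 : P z0 = x0 1).
  { destruct (HP z0 ltac:(rewrite Rminus_eq_0, Rabs_R0; lra)) as [x [H1 [H2 [H3 H4]]]].
    rewrite <- H3. specialize (H4 1 ltac:(lra)). rewrite Rminus_eq_0, Rabs_R0, Rmult_0_r in H4.
    assert (Rabs (x 1 - x0 1) = 0) by (assert (H5 := Rabs_pos (x 1 - x0 1)); lra).
    apply Rabs_eq_0 in H. lra. }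
  set (I0 := RInt (fun s => Dq s (x0 (clamp s)) (x0 (clamp s))) 0 1).
  apply is_derive_Reals. intros eps Heps.
  destruct (eps_cont exp I0 (derive_cont exp I0 _ (is_derive_exp I0)) eps Heps) as [d1 [Hd1 Hd1b]].
  assert (Hdel : 0 < Rmin d (Rmin (1/(C+1)) (d1/(Lp*C+1)))).
  { repeat apply Rmin_pos; auto; apply Rdiv_lt_0_compat; nra. }
  exists (mkposreal _ Hdel). intros h Hh0 Hh. simpl in Hh.
  assert (Hh1 : Rabs h < d) by (eapply Rlt_le_trans; [apply Hh|apply Rmin_l]).
  assert (Hh2 : Rabs h < 1/(C+1)) by (eapply Rlt_le_trans; [apply Hh|]; eapply Rle_trans; [apply Rmin_r|apply Rmin_l]).
  assert (Hh3 : Rabs h < d1/(Lp*C+1)) by (eapply Rlt_le_trans; [apply Hh|]; eapply Rle_trans; [apply Rmin_r|apply Rmin_r]).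
  destruct (HP (z0 + h) ltac:(replace (z0 + h - z0) with h by ring; auto)) as [x [Hx [Hx0' [Hx1 Hxb]]]].
  replace (z0 + h - z0) with h in Hxb by ring.
  rewrite HPz0, <- Hx1.
  rewrite (var_formula F Dq x0 x HD1 HD2 Hx0 Hx). rewrite Hx0'. fold z0.
  replace ((z0 + h - z0) * exp (RInt (fun s : R => Dq s (x (clamp s)) (x0 (clamp s))) 0 1) / h)
    with (exp (RInt (fun s : R => Dq s (x (clamp s)) (x0 (clamp s))) 0 1)) by (field; auto).
  apply Hd1b.
  assert (HCh : C * Rabs h <= 1).
  { assert (C * Rabs h <= C * (1/(C+1))) by (apply Rmult_le_compat_l; lra).
    assert (C * (1/(C+1)) <= 1).
    { unfold Rdiv. rewrite Rmult_1_l. apply (Rmult_le_reg_r (C+1)); [lra|]. rewrite Rmult_assoc, Rinv_l by lra. lra. }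
    lra. }
  eapply Rle_lt_trans. unfold I0.
  apply (RInt_diff_bound _ _ (fun _ => Lp * (C * Rabs h))). lra.
  - intros s. apply HD2; apply clamp_comp_cont; eapply sol_cont; eauto.
  - intros s. apply HD2; apply clamp_comp_cont; eapply sol_cont; eauto.
  - intros s. apply continuous_const.
  - intros s Hs. rewrite !clamp_id by lra. eapply Rle_trans. apply HLpb. lra.
    + specialize (Hxb s Hs). specialize (HM0b s Hs). apply Rabs_le_between in Hxb. apply Rabs_le_between in HM0b.
      apply Rabs_le_between. lra.
    + specialize (HM0b s Hs). lra.
    + apply Rmult_le_compat_l. lra. apply Hxb; auto.
  - rewrite RInt_const. rsimpl. rewrite Rminus_0_r, Rmult_1_l.
    apply (Rmult_lt_compat_l (Lp*C+1)) in Hh3; [|nra].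
    replace ((Lp*C+1) * (d1/(Lp*C+1))) with d1 in Hh3 by (field; nra).
    assert (0 <= Rabs h) by apply Rabs_pos. nra.
Qed.

Lemma deriv_pos_side (g : R -> R) t d : is_derive g t d -> 0 < d -> forall rho, 0 < rho ->
  exists h, 0 < h < rho /\ g t < g (t + h) /\ g (t - h) < g t.
Proof.
  intros H Hd rho Hr. apply is_derive_Reals in H.
  destruct (H d Hd) as [del Hdel].
  set (h := Rmin (del/2) (rho/2)).
  assert (Hh : 0 < h) by (unfold h; apply Rmin_pos; destruct del; simpl; lra).
  assert (Hh1 : h <= del/2) by apply Rmin_l. assert (Hh2 : h <= rho/2) by apply Rmin_r.
  assert (Hdp : 0 < del) by (destruct del; auto).
  exists h. split; [lra|].
  assert (A1 := Hdel h ltac:(lra) ltac:(rewrite Rabs_right; lra)).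
  assert (A2 := Hdel (-h) ltac:(lra) ltac:(rewrite Rabs_left; lra)).
  apply Rabs_lt_between in A1. apply Rabs_lt_between in A2.
  destruct A1 as [A1 _]. destruct A2 as [A2 _].
  assert (0 < (g (t + h) - g t) / h) by lra.
  assert (0 < (g (t + - h) - g t) / - h) by lra.
  split.
  - apply Rmult_lt_compat_r with (r := h) in H0; [|lra]. unfold Rdiv in H0.
    rewrite Rmult_assoc, Rinv_l, Rmult_0_l in H0 by lra. lra.
  - replace (t - h) with (t + - h) by ring.
    apply Rmult_lt_compat_r with (r := h) in H1; [|lra]. unfold Rdiv in H1.
    replace ((g (t + - h) - g t) * / - h * h) with (- (g (t + - h) - g t)) in H1 by (field; lra). lra.
Qed.

Lemma no_down (g dg : R -> R) a b : a < b -> (forall t, a <= t <= b -> is_derive g t (dg t)) ->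
  0 < g a -> g b <= 0 -> (forall t, a <= t <= b -> g t = 0 -> 0 < dg t) -> False.
Proof.
  intros Hab Hd Ha Hb Hz.
  set (E := fun t => a <= t <= b /\ forall u, a <= u <= t -> 0 < g u).
  assert (HEb : bound E) by (exists b; intros t [Ht _]; lra).
  assert (HEa : exists x, E x) by (exists a; split; [lra|]; intros u Hu; replace u with a by lra; auto).
  destruct (completeness E HEb HEa) as [s [Hs1 Hs2]].
  assert (Has : a <= s) by (apply Hs1; destruct HEa; unfold E; split; [lra|]; intros u Hu; replace u with a by lra; auto).
  assert (Hsb : s <= b) by (apply Hs2; intros t [Ht _]; lra).
  assert (Hleft : forall u, a <= u < s -> 0 < g u).
  { intros u Hu. destruct (Rle_dec s u) as [|Hn]; [lra|].
    assert (~ is_upper_bound E u) by (intros Hc; specialize (Hs2 u Hc); lra).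
    apply Classical_Pred_Type.not_all_ex_not in H. destruct H as [t Ht].
    apply Classical_Prop.imply_to_and in Ht. destruct Ht as [[Ht1 Ht2] Ht3]. apply Ht2. lra. }
  assert (Hcs := eps_cont g s (derive_cont g s _ (Hd s ltac:(lra)))).
  assert (Hgs : g s = 0).
  { destruct (Rtotal_order (g s) 0) as [Hl|[He|Hg]]; auto.
    - exfalso. destruct (Hcs (- g s) ltac:(lra)) as [eta [He Hc]].
      destruct (Req_dec s a) as [->|Hsa]; [lra|].
      set (u := Rmax a (s - eta/2)).
      assert (a <= u < s) by (unfold u, Rmax; destruct Rle_dec; lra).
      specialize (Hleft u H). specialize (Hc u).
      assert (Rabs (u - s) < eta) by (unfold u, Rmax; destruct Rle_dec; rewrite Rabs_left by lra; lra).
      specialize (Hc H0). apply Rabs_lt_between in Hc. lra.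
    - exfalso. destruct (Hcs (g s) ltac:(lra)) as [eta [He Hc]].
      destruct (Req_dec s b) as [->|Hsb']; [lra|].
      set (u := Rmin b (s + eta/2)).
      assert (s < u <= b) by (unfold u, Rmin; destruct Rle_dec; lra).
      assert (E u).
      { split; [lra|]. intros v Hv. destruct (Rlt_dec v s) as [Hvs|Hvs]. apply Hleft; lra.
        assert (Hvv : Rabs (v - s) < eta) by (unfold u, Rmin in Hv; destruct Rle_dec; rewrite Rabs_right by lra; lra).
        specialize (Hc v Hvv). apply Rabs_lt_between in Hc. lra. }
      specialize (Hs1 u H0). lra. }
  assert (Hsa : a < s) by (destruct (Req_dec s a) as [->|]; lra).
  destruct (deriv_pos_side g s (dg s) (Hd s ltac:(lra)) (Hz s ltac:(lra) Hgs) (s - a) ltac:(lra)) as [h [Hh [_ Hh2]]].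
  specialize (Hleft (s - h) ltac:(lra)). lra.
Qed.

Lemma no_zero_periodic (g dg : R -> R) : (forall t, 0 <= t <= 1 -> is_derive g t (dg t)) ->
  g 0 = g 1 -> (forall t, 0 <= t <= 1 -> g t = 0 -> 0 < dg t) -> forall t, 0 <= t <= 1 -> g t <> 0.
Proof.
  intros Hd Hp Hz.
  assert (Main : forall t0, 0 <= t0 < 1 -> g t0 = 0 -> False).
  { intros t0 Ht0 Hg0.
    destruct (deriv_pos_side g t0 (dg t0) (Hd t0 ltac:(lra)) (Hz t0 ltac:(lra) Hg0) (1 - t0) ltac:(lra)) as [h [Hh [Hh1 _]]].
    destruct (Rle_dec (g 1) 0) as [H1|H1].
    - apply (no_down g dg (t0 + h) 1); auto; try lra.
      intros; apply Hd; lra. intros; apply Hz; auto; lra.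
    - assert (Hg0' : 0 < g 0) by lra.
      destruct (Req_dec t0 0) as [->|Hne]; [lra|].
      apply (no_down g dg 0 t0); auto; try lra.
      intros; apply Hd; lra. intros; apply Hz; auto; lra. }
  intros t Ht Hgt. destruct (Req_dec t 1) as [->|Hne].
  - apply (Main 0); lra.
  - apply (Main t); auto; lra.
Qed.

Lemma pow01 t n : 0 <= t <= 1 -> 0 <= t ^ n <= 1.
Proof.
  intros Ht. induction n; simpl; [lra|]. split; [apply Rmult_le_pos; lra|].
  rewrite <- (Rmult_1_r 1). apply Rmult_le_compat; lra.
Qed.

Definition Af (j k : nat) (c0 c1 c2 : R) (t : R) := c0 + c1 * t ^ j + c2 * t ^ k.

Lemma Af_bound j k c0 c1 c2 t : 0 <= t <= 1 -> Rabs (Af j k c0 c1 c2 t) <= Rabs c0 + Rabs c1 + Rabs c2.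
Proof.
  intros Ht. unfold Af. destruct (pow01 t j Ht). destruct (pow01 t k Ht).
  eapply Rle_trans. apply Rabs_triang. eapply Rle_trans. apply Rplus_le_compat_r. apply Rabs_triang.
  rewrite !Rabs_mult. rewrite (Rabs_right (t^j)), (Rabs_right (t^k)) by lra.
  assert (0 <= Rabs c1) by apply Rabs_pos. assert (0 <= Rabs c2) by apply Rabs_pos. nra.
Qed.

Lemma Af_cont j k c0 c1 c2 t : continuous (Af j k c0 c1 c2) t.
Proof.
  apply (derive_cont _ t (c1 * (INR j * t ^ Nat.pred j) + c2 * (INR k * t ^ Nat.pred k))).
  unfold Af. auto_derive; auto. ring.
Qed.

Lemma cmult (f g : R -> R) t : continuous f t -> continuous g t -> continuous (fun s => f s * g s) t.
Proof. intros; apply (continuous_mult (K:=R_AbsRing)); auto. Qed.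
Lemma cplus (f g : R -> R) t : continuous f t -> continuous g t -> continuous (fun s => f s + g s) t.
Proof. intros; apply (continuous_plus (V:=R_NormedModule)); auto. Qed.
Lemma cpow (f : R -> R) n t : continuous f t -> continuous (fun s => f s ^ n) t.
Proof.
  intros H. induction n; simpl. apply continuous_const. apply cmult; auto.
Qed.

Lemma abel_eq j k a0 a1 a2 b0 b1 b2 t u :
  abel_rhs j k a0 a1 a2 b0 b1 b2 t u = Af j k a0 a1 a2 t * u ^ 3 + Af j k b0 b1 b2 t * u ^ 2.
Proof. reflexivity. Qed.

Definition abel_Dq j k a0 a1 a2 b0 b1 b2 (t u v : R) :=
  Af j k a0 a1 a2 t * (u^2 + u*v + v^2) + Af j k b0 b1 b2 t * (u + v).

Section Abel.
Variables (j k : nat) (a0 a1 a2 b0 b1 b2 : R).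
Let F := abel_rhs j k a0 a1 a2 b0 b1 b2.
Let Dq := abel_Dq j k a0 a1 a2 b0 b1 b2.
Let SA := Rabs a0 + Rabs a1 + Rabs a2.
Let SB := Rabs b0 + Rabs b1 + Rabs b2.

Lemma abel_HD1 t u v : F t u - F t v = Dq t u v * (u - v).
Proof. unfold F, Dq, abel_Dq. rewrite !abel_eq. ring. Qed.

Lemma abel_Fcont : F_cont F.
Proof.
  intros h t Hh. unfold F. change (continuous (fun s => Af j k a0 a1 a2 s * h s ^ 3 + Af j k b0 b1 b2 s * h s ^ 2) t).
  apply cplus; apply cmult; try apply Af_cont; apply cpow; auto.
Qed.

Lemma abel_Dqcont : Dq_cont Dq.
Proof.
  intros g h t Hg Hh. unfold Dq, abel_Dq. apply cplus; apply cmult; try apply Af_cont.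
  - repeat apply cplus; (apply cpow; auto) || (apply cmult; auto).
  - apply cplus; auto.
Qed.

Lemma abel_Dqlip : Dq_lip Dq.
Proof.
  intros M. exists (SA * 3 * (Rabs M) + SB + 1). split.
  { unfold SA, SB. assert (H1 := Rabs_pos a0). assert (H2 := Rabs_pos a1). assert (H3 := Rabs_pos a2).
    assert (H4 := Rabs_pos b0). assert (H5 := Rabs_pos b1). assert (H6 := Rabs_pos b2). assert (H7 := Rabs_pos M). nra. }
  intros t u v Ht Hu Hv. unfold Dq, abel_Dq.
  replace (Af j k a0 a1 a2 t * (u ^ 2 + u * v + v ^ 2) + Af j k b0 b1 b2 t * (u + v) -
    (Af j k a0 a1 a2 t * (v ^ 2 + v * v + v ^ 2) + Af j k b0 b1 b2 t * (v + v)))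
    with ((Af j k a0 a1 a2 t * (u + 2 * v) + Af j k b0 b1 b2 t) * (u - v)) by ring.
  rewrite Rabs_mult. apply Rmult_le_compat_r. apply Rabs_pos.
  eapply Rle_trans. apply Rabs_triang. rewrite Rabs_mult.
  assert (HA := Af_bound j k a0 a1 a2 t Ht). assert (HB := Af_bound j k b0 b1 b2 t Ht).
  fold SA in HA. fold SB in HB.
  assert (Rabs (u + 2 * v) <= 3 * Rabs M).
  { eapply Rle_trans. apply Rabs_triang. rewrite Rabs_mult, (Rabs_right 2) by lra.
    assert (Rabs u <= Rabs M) by (eapply Rle_trans; [apply Hu|apply RRle_abs]).
    assert (Rabs v <= Rabs M) by (eapply Rle_trans; [apply Hv|apply RRle_abs]). lra. }
  assert (0 <= Rabs (Af j k a0 a1 a2 t)) by apply Rabs_pos.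
  assert (0 <= Rabs (u + 2*v)) by apply Rabs_pos.
  assert (Rabs (Af j k a0 a1 a2 t) * Rabs (u + 2 * v) <= SA * (3 * Rabs M)) by (apply Rmult_le_compat; lra).
  lra.
Qed.

Lemma abel_lip : loc_lip F.
Proof.
  intros M. exists (SA * 3 * (M^2) + SB * 2 * Rabs M + 1). split.
  { unfold SA, SB. assert (H1 := Rabs_pos a0). assert (H2 := Rabs_pos a1). assert (H3 := Rabs_pos a2).
    assert (H4 := Rabs_pos b0). assert (H5 := Rabs_pos b1). assert (H6 := Rabs_pos b2). assert (H7 := Rabs_pos M).
    assert (0 <= M^2) by apply pow2_ge_0. nra. }
  intros t u v Ht Hu Hv. rewrite abel_HD1. unfold Dq, abel_Dq. rewrite Rabs_mult.
  apply Rmult_le_compat_r. apply Rabs_pos.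
  eapply Rle_trans. apply Rabs_triang. rewrite !Rabs_mult.
  assert (HA := Af_bound j k a0 a1 a2 t Ht). assert (HB := Af_bound j k b0 b1 b2 t Ht).
  fold SA in HA. fold SB in HB.
  assert (HM : 0 <= M) by (eapply Rle_trans; [apply Rabs_pos|apply Hu]).
  rewrite (Rabs_right M) by lra.
  assert (Rabs (u ^ 2 + u * v + v ^ 2) <= 3 * M^2).
  { eapply Rle_trans. apply Rabs_triang. eapply Rle_trans. apply Rplus_le_compat_r. apply Rabs_triang.
    rewrite !Rabs_mult, <- !RPow_abs. simpl. rewrite !Rmult_1_r.
    assert (0 <= Rabs u) by apply Rabs_pos. assert (0 <= Rabs v) by apply Rabs_pos. nra. }
  assert (Rabs (u + v) <= 2 * M) by (eapply Rle_trans; [apply Rabs_triang|lra]).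
  assert (0 <= Rabs (Af j k a0 a1 a2 t)) by apply Rabs_pos.
  assert (0 <= Rabs (Af j k b0 b1 b2 t)) by apply Rabs_pos.
  assert (0 <= Rabs (u ^ 2 + u * v + v ^ 2)) by apply Rabs_pos.
  assert (0 <= Rabs (u + v)) by apply Rabs_pos.
  assert (Rabs (Af j k a0 a1 a2 t) * Rabs (u ^ 2 + u * v + v ^ 2) <= SA * (3 * M^2)) by (apply Rmult_le_compat; lra).
  assert (Rabs (Af j k b0 b1 b2 t) * Rabs (u + v) <= SB * (2 * M)) by (apply Rmult_le_compat; lra).
  lra.
Qed.

End Abel.

Lemma rolle01 (f df : R -> R) : (forall t, 0 <= t <= 1 -> is_derive f t (df t)) -> f 0 = f 1 ->
  exists c, 0 <= c <= 1 /\ df c = 0.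
Proof.
  intros Hd Hp. destruct (MVT_gen f 0 1 df) as [c [Hc Heq]].
  - intros x Hx. rewrite Rmin_left, Rmax_right in Hx by lra. apply Hd; lra.
  - intros x Hx. rewrite Rmin_left, Rmax_right in Hx by lra. eapply derive_contpt. apply Hd; lra.
  - rewrite Rmin_left, Rmax_right in Hc by lra. exists c. split; auto. rewrite Hp in Heq. lra.
Qed.

Lemma sign_const (g : R -> R) : (forall t, 0 <= t <= 1 -> continuous g t) ->
  (forall t, 0 <= t <= 1 -> g t <> 0) -> 0 < g 0 * g 1.
Proof.
  intros Hc Hn. destruct (Rlt_dec 0 (g 0 * g 1)) as [|Hle]; auto. exfalso.
  set (G := fun s => g (clamp s)).
  assert (HG : forall s, continuous G s) by (intros s; apply clamp_comp_cont; auto).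
  assert (G0 : G 0 = g 0) by (unfold G; rewrite clamp_id; auto; lra).
  assert (G1 : G 1 = g 1) by (unfold G; rewrite clamp_id; auto; lra).
  destruct (IVT_gen_consistent G 0 1 0 HG) as [x [Hx Hgx]].
  - rewrite G0, G1. unfold Rmin, Rmax. destruct Rle_dec; nra.
  - rewrite Rmin_left, Rmax_right in Hx by lra. unfold G in Hgx. rewrite clamp_id in Hgx by lra.
    apply (Hn x); auto.
Qed.

Lemma HfA (xs : R) : exists Hf : R -> R, forall u, u <> 0 -> u <> xs -> is_derive Hf u (1 / (u^2 * (u - xs))).
Proof.
  destruct (Req_dec xs 0) as [->|Hxs].
  - exists (fun u => - / (2 * u^2)). intros u Hu _. auto_derive. nra. field. auto.
  - exists (fun u => (ln ((u - xs)^2) - ln (u^2)) / (2 * xs^2) + 1 / (xs * u)).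
    intros u Hu Hus. auto_derive.
    + split. { rewrite Rmult_1_r. apply (Rsqr_pos_lt (u + - xs)). lra. }
      split. { rewrite Rmult_1_r. apply Rsqr_pos_lt; auto. }
      split; [apply Rmult_integral_contrapositive; split; auto | auto].
    + field. repeat split; auto. lra.
Qed.

Lemma Kf_deriv (xs u : R) : u <> 0 -> u <> xs ->
  is_derive (fun u => ln (u^2) + ln ((u - xs)^2) / 2) u (2 / u + 1 / (u - xs)).
Proof.
  intros Hu Hus. auto_derive.
  - split. { rewrite Rmult_1_r. apply Rsqr_pos_lt; auto. }
    split; auto. rewrite Rmult_1_r. apply (Rsqr_pos_lt (u + - xs)). lra.
  - field. split; auto. lra.
Qed.

Lemma comp_deriv (h x : R -> R) t hd d : is_derive h (x t) hd -> is_derive x t d ->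
  is_derive (fun s => h (x s)) t (hd * d).
Proof. intros H1 H2. assert (H := is_derive_comp h x t _ _ H1 H2). eapply is_derive_ext'; [| |apply H]; intros; rsimpl; ring. Qed.

Definition Pf (j k : nat) (c0 c1 c2 : R) (t : R) := c0 * t + c1 * t^(S j) / INR (S j) + c2 * t^(S k) / INR (S k).

Lemma Pf_deriv j k c0 c1 c2 t : is_derive (Pf j k c0 c1 c2) t (Af j k c0 c1 c2 t).
Proof.
  unfold Pf, Af. auto_derive; auto.
  assert (INR (S j) <> 0) by (apply not_0_INR; lia).
  assert (INR (S k) <> 0) by (apply not_0_INR; lia).
  simpl Nat.pred. field. split; auto.
Qed.

Lemma Pf0 j k c0 c1 c2 : Pf j k c0 c1 c2 0 = 0.
Proof. unfold Pf. rewrite !pow_i by lia. unfold Rdiv. ring. Qed.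

Section Main.
Variables (j k : nat) (a0 a1 a2 b0 b1 b2 : R).
Hypotheses (Ha : a1 + a2 = 0) (Hb : b1 + b2 = 0).
Let F := abel_rhs j k a0 a1 a2 b0 b1 b2.
Let Dq := abel_Dq j k a0 a1 a2 b0 b1 b2.
Let A := Af j k a0 a1 a2.
Let B := Af j k b0 b1 b2.

Lemma F_AB t u : F t u = A t * u^3 + B t * u^2.
Proof. reflexivity. Qed.

Lemma Dq_AB t u : Dq t u u = 3 * A t * u^2 + 2 * B t * u.
Proof. unfold Dq, abel_Dq. fold A B. ring. Qed.

Lemma const_sol c : (forall t, 0 <= t <= 1 -> F t c = 0) -> is_solution F (fun _ => c).
Proof.
  intros H t Ht. rewrite H by auto. eapply is_derive_ext'; [| |apply (is_derive_const c t)]; intros; reflexivity.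
Qed.

Lemma zero_sol : is_solution F (fun _ => 0).
Proof. apply const_sol. intros. rewrite F_AB. ring. Qed.

Lemma uniqF x y t0 : is_solution F x -> is_solution F y -> 0 <= t0 <= 1 -> x t0 = y t0 ->
  forall t, 0 <= t <= 1 -> x t = y t.
Proof. intros Hx Hy Ht0 He t Ht. apply (uniqueness F x y t0); auto. apply abel_lip. Qed.

Lemma nonzero_orbit x : is_solution F x -> (exists t, 0 <= t <= 1 /\ x t <> 0) -> forall t, 0 <= t <= 1 -> x t <> 0.
Proof.
  intros Hx [t0 [Ht0 Hne]] t Ht Hz. apply Hne.
  apply (uniqF x (fun _ => 0) t Hx zero_sol Ht Hz t0 Ht0).
Qed.

Lemma diff_orbits x y t0 : is_solution F x -> is_solution F y -> 0 <= t0 <= 1 -> x t0 <> y t0 ->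
  forall t, 0 <= t <= 1 -> x t <> y t.
Proof. intros Hx Hy Ht0 Hne t Ht He. apply Hne. apply (uniqF x y t Hx Hy Ht He t0 Ht0). Qed.

Lemma hyp_of_I0 x : is_solution F x ->
  RInt (fun s => Dq s (x (clamp s)) (x (clamp s))) 0 1 <> 0 -> hyperbolic F (x 0).
Proof.
  intros Hx HI.
  destruct (poincare_deriv F Dq (abel_Fcont j k a0 a1 a2 b0 b1 b2) (abel_lip j k a0 a1 a2 b0 b1 b2)
    (abel_HD1 j k a0 a1 a2 b0 b1 b2) (abel_Dqcont j k a0 a1 a2 b0 b1 b2) (abel_Dqlip j k a0 a1 a2 b0 b1 b2) x Hx)
    as [P [d [Hd [HP HPd]]]].
  exists P, d. split; auto. split; auto. eexists. split. apply HPd.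
  intros He. apply HI. apply exp_inv. rewrite He, exp_0. reflexivity.
Qed.

Lemma rint_deriv x : is_solution F x -> forall t, 0 <= t <= 1 ->
  is_derive (fun t => RInt (fun s => Dq s (x (clamp s)) (x (clamp s))) 0 t) t (Dq t (x t) (x t)).
Proof.
  intros Hx t Ht.
  assert (H := RInt_deriv (fun s => Dq s (x (clamp s)) (x (clamp s))) 0 t).
  cbv beta in H. rewrite clamp_id in H by auto. apply H.
  intros s. apply abel_Dqcont; apply clamp_comp_cont; eapply sol_cont; eauto.
Qed.

Lemma center_of d0 : 0 < d0 ->
  (forall z x, z <> 0 -> Rabs z < d0 -> is_solution F x -> x 0 = z -> x 1 = z) -> has_center F.
Proof.
  intros Hd0 H.
  destruct (existence F (abel_Fcont j k a0 a1 a2 b0 b1 b2) (abel_lip j k a0 a1 a2 b0 b1 b2) _ zero_sol)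
    as [d [C [Hd [HC Hex]]]].
  exists (Rmin d d0). split. apply Rmin_pos; auto.
  intros z Hz. split.
  - destruct (Hex z) as [x [Hx1 [Hx2 _]]]. rewrite Rminus_0_r. eapply Rlt_le_trans; [apply Hz|apply Rmin_l].
    exists x; auto.
  - intros x Hx Hx0. destruct (Req_dec z 0) as [->|Hz0].
    + apply (uniqF x (fun _ => 0) 0 Hx zero_sol); auto; lra.
    + apply (H z x Hz0); auto. eapply Rlt_le_trans; [apply Hz|apply Rmin_r].
Qed.


Lemma inv_deriv u : u <> 0 -> is_derive (fun u => - / u) u (/ u^2).
Proof. intros Hu. auto_derive; auto. field; auto. Qed.

Lemma lnsq_deriv u : u <> 0 -> is_derive (fun u => ln (u^2)) u (2 / u).
Proof. intros Hu. auto_derive. rewrite Rmult_1_r. apply Rsqr_pos_lt; auto. field; auto. Qed.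

Lemma Rinv_cancel a b : - / a = - / b -> a <> 0 -> b <> 0 -> a = b.
Proof. intros H Ha' Hb'. rewrite <- (Rinv_inv a), <- (Rinv_inv b). f_equal. lra. Qed.

Lemma caseC2 : a0 = 0 -> a1 = 0 -> ~ has_center F ->
  forall x, periodic_orbit F x -> (exists t, 0 <= t <= 1 /\ x t <> 0) -> False.
Proof.
  intros H0 H1 Hnc.
  assert (HA0 : forall t, A t = 0) by (intros t; unfold A, Af; replace a2 with 0 by lra; rewrite H0, H1; ring).
  assert (Key : forall x, is_solution F x -> (forall t, 0 <= t <= 1 -> x t <> 0) ->
     - / x 1 - Pf j k b0 b1 b2 1 = - / x 0 - Pf j k b0 b1 b2 0).
  { intros x Hx Hnz. apply (deriv_zero_const (fun s => - / x s - Pf j k b0 b1 b2 s) (fun _ => 0) 0 1). lra.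
    - intros t Ht. assert (H := comp_deriv _ x t _ _ (inv_deriv (x t) (Hnz t Ht)) (Hx t Ht)).
      assert (H2 := is_derive_minus _ _ t _ _ H (Pf_deriv j k b0 b1 b2 t)).
      eapply is_derive_ext'; [| |apply H2]; intros; rsimpl. reflexivity.
      rewrite F_AB, HA0. fold B. specialize (Hnz t Ht). field. auto.
    - intros; reflexivity. }
  destruct (Req_dec (Pf j k b0 b1 b2 1) 0) as [HP|HP].
  - exfalso. apply Hnc. apply (center_of 1); [lra|]. intros z x Hz _ Hx Hx0.
    assert (Hnz : forall t, 0 <= t <= 1 -> x t <> 0).
    { apply nonzero_orbit; auto. exists 0. split; [lra|]. rewrite Hx0; auto. }
    specialize (Key x Hx Hnz). rewrite HP, Pf0, Hx0 in Key.
    apply Rinv_cancel. lra. apply Hnz; lra. auto.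
  - intros x [Hx Hper] Hne.
    assert (Hnz := nonzero_orbit x Hx Hne).
    specialize (Key x Hx Hnz). rewrite Pf0, Hper in Key. lra.
Qed.

Lemma caseC1 : a1 = 0 -> a0 <> 0 ->
  (forall x y : R -> R,
      periodic_orbit F x -> periodic_orbit F y ->
      (exists t, 0 <= t <= 1 /\ x t <> 0) -> (exists t, 0 <= t <= 1 /\ y t <> 0) ->
      forall t, 0 <= t <= 1 -> x t = y t) /\
  (forall x : R -> R, periodic_orbit F x -> (exists t, 0 <= t <= 1 /\ x t <> 0) -> hyperbolic F (x 0)).
Proof.
  intros H1 H0.
  assert (HA0 : forall t, A t = a0) by (intros t; unfold A, Af; replace a2 with 0 by lra; rewrite H1; ring).
  split.
  - intros x y [Hx Hxp] [Hy Hyp] Hxn Hyn t Ht.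
    destruct (Req_dec (x t) (y t)) as [|Hne]; auto. exfalso.
    assert (Hd := diff_orbits x y t Hx Hy Ht Hne).
    assert (Hnx := nonzero_orbit x Hx Hxn). assert (Hny := nonzero_orbit y Hy Hyn).
    destruct (rolle01 (fun s => - / x s - - / y s) (fun s => a0 * (x s - y s))) as [c [Hc Hc0]].
    + intros s Hs.
      assert (H := comp_deriv _ x s _ _ (inv_deriv (x s) (Hnx s Hs)) (Hx s Hs)).
      assert (H' := comp_deriv _ y s _ _ (inv_deriv (y s) (Hny s Hs)) (Hy s Hs)).
      assert (H2 := is_derive_minus _ _ s _ _ H H').
      eapply is_derive_ext'; [| |apply H2]; intros; rsimpl. reflexivity.
      rewrite !F_AB, HA0. specialize (Hnx s Hs). specialize (Hny s Hs). field. auto.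
    + rewrite Hxp, Hyp. reflexivity.
    + apply Rmult_integral in Hc0. destruct Hc0 as [|Hc0]; [auto|]. apply (Hd c Hc). lra.
  - intros x [Hx Hxp] Hxn. apply hyp_of_I0; auto. intros HI.
    assert (Hnx := nonzero_orbit x Hx Hxn).
    destruct (rolle01 (fun s => RInt (fun s => Dq s (x (clamp s)) (x (clamp s))) 0 s - ln ((x s)^2))
       (fun s => a0 * (x s)^2)) as [c [Hc Hc0]].
    + intros s Hs.
      assert (H := comp_deriv _ x s _ _ (lnsq_deriv (x s) (Hnx s Hs)) (Hx s Hs)).
      assert (H2 := is_derive_minus _ _ s _ _ (rint_deriv x Hx s Hs) H).
      eapply is_derive_ext'; [| |apply H2]; intros; rsimpl. reflexivity.
      rewrite Dq_AB, F_AB, HA0. specialize (Hnx s Hs). field. auto.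
    + rewrite HI, RInt_point, Hxp. rsimpl. ring.
    + specialize (Hnx c Hc). apply Rmult_integral in Hc0. destruct Hc0 as [|Hc0]; [auto|].
      exfalso. apply (pow_nonzero (x c) 2) in Hnx. contradiction.
Qed.


Lemma div_zero_num p q : p / q = 0 -> q <> 0 -> p = 0.
Proof. intros H Hq. unfold Rdiv in H. apply Rmult_integral in H. destruct H; auto. exfalso. apply (Rinv_neq_0_compat q Hq). auto. Qed.

Lemma caseA_m : a1 <> 0 -> a0 * (- b1 / a1) + b0 <> 0 ->
  (forall x y : R -> R,
      periodic_orbit F x -> periodic_orbit F y ->
      (exists t, 0 <= t <= 1 /\ x t <> 0) -> (exists t, 0 <= t <= 1 /\ y t <> 0) ->
      forall t, 0 <= t <= 1 -> x t = y t) /\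
  (forall x : R -> R, periodic_orbit F x -> (exists t, 0 <= t <= 1 /\ x t <> 0) -> hyperbolic F (x 0)).
Proof.
  intros H1. set (xs := - b1 / a1). set (m := a0 * xs + b0). intros Hm.
  assert (HB' : forall t, B t = m - A t * xs).
  { intros t. unfold B, A, Af, m, xs. replace a2 with (-a1) by lra. replace b2 with (-b1) by lra. field. auto. }
  assert (HF : forall t u, F t u = A t * u^2 * (u - xs) + m * u^2) by (intros; rewrite F_AB, HB'; ring).
  assert (Havoid : forall x, periodic_orbit F x -> (exists t, 0 <= t <= 1 /\ x t <> 0) ->
     forall t, 0 <= t <= 1 -> x t <> xs).
  { intros x [Hx Hxp] Hxn. assert (Hnx := nonzero_orbit x Hx Hxn).
    destruct (Req_dec xs 0) as [Hxs|Hxs]. { rewrite Hxs; auto. }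
    intros t Ht Heq.
    apply (no_zero_periodic (fun s => m * (x s - xs)) (fun s => m * F s (x s))) with t; auto.
    - intros s Hs. assert (H := is_derive_minus _ _ s _ _ (Hx s Hs) (is_derive_const xs s)).
      assert (H2 := is_derive_scal _ s m _ H). eapply is_derive_ext'; [| |apply H2]; intros; rsimpl; ring.
    - rewrite Hxp. reflexivity.
    - intros s Hs Hz. assert (x s = xs).
      { apply Rmult_integral in Hz. destruct Hz; [contradiction|lra]. }
      rewrite H, HF. replace (xs - xs) with 0 by ring.
      assert (0 < xs^2) by (rewrite <- Rsqr_pow2; apply Rsqr_pos_lt; auto).
      assert (0 < m^2) by (rewrite <- Rsqr_pow2; apply Rsqr_pos_lt; auto). nra.
    - rewrite Heq. ring. }
  destruct (HfA xs) as [Hf HHf].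
  split.
  - intros x y Hxo Hyo Hxn Hyn t Ht.
    destruct Hxo as [Hx Hxp]. destruct Hyo as [Hy Hyp].
    destruct (Req_dec (x t) (y t)) as [|Hne]; auto. exfalso.
    assert (Hd := diff_orbits x y t Hx Hy Ht Hne).
    assert (Hnx := nonzero_orbit x Hx Hxn). assert (Hny := nonzero_orbit y Hy Hyn).
    assert (Hax := Havoid x (conj Hx Hxp) Hxn). assert (Hay := Havoid y (conj Hy Hyp) Hyn).
    destruct (rolle01 (fun s => Hf (x s) - Hf (y s)) (fun s => m * (y s - x s) / ((x s - xs) * (y s - xs)))) as [c [Hc Hc0]].
    + intros s Hs.
      assert (H := comp_deriv _ x s _ _ (HHf (x s) (Hnx s Hs) (Hax s Hs)) (Hx s Hs)).
      assert (H' := comp_deriv _ y s _ _ (HHf (y s) (Hny s Hs) (Hay s Hs)) (Hy s Hs)).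
      assert (H2 := is_derive_minus _ _ s _ _ H H').
      eapply is_derive_ext'; [| |apply H2]; intros; rsimpl. reflexivity.
      rewrite !HF. specialize (Hnx s Hs). specialize (Hny s Hs). specialize (Hax s Hs). specialize (Hay s Hs).
      field. repeat split; auto; lra.
    + rewrite Hxp, Hyp. reflexivity.
    + apply div_zero_num in Hc0.
      * apply Rmult_integral in Hc0. destruct Hc0 as [|Hc0]; [contradiction|]. apply (Hd c Hc). lra.
      * specialize (Hax c Hc). specialize (Hay c Hc). apply Rmult_integral_contrapositive. split; lra.
  - intros x Hxo Hxn. destruct Hxo as [Hx Hxp]. apply hyp_of_I0; auto. intros HI.
    assert (Hnx := nonzero_orbit x Hx Hxn). assert (Hax := Havoid x (conj Hx Hxp) Hxn).
    destruct (rolle01 (fun s => RInt (fun s => Dq s (x (clamp s)) (x (clamp s))) 0 s - (ln ((x s)^2) + ln ((x s - xs)^2) / 2))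
       (fun s => - m * (x s)^2 / (x s - xs))) as [c [Hc Hc0]].
    + intros s Hs.
      assert (H := comp_deriv _ x s _ _ (Kf_deriv xs (x s) (Hnx s Hs) (Hax s Hs)) (Hx s Hs)).
      assert (H2 := is_derive_minus _ _ s _ _ (rint_deriv x Hx s Hs) H).
      eapply is_derive_ext'; [| |apply H2]; intros; rsimpl. reflexivity.
      rewrite Dq_AB, HF, HB'. specialize (Hnx s Hs). specialize (Hax s Hs). field. split; auto; lra.
    + rewrite HI, RInt_point, Hxp. rsimpl. ring.
    + specialize (Hnx c Hc). specialize (Hax c Hc). apply div_zero_num in Hc0; [|lra].
      apply Rmult_integral in Hc0. destruct Hc0 as [Hc0|Hc0]. apply Hm; lra.
      apply (pow_nonzero (x c) 2) in Hnx. contradiction.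
Qed.


Lemma between_ne u v w p : Rmin u v <= w <= Rmax u v -> 0 < (u - p) * (v - p) -> w <> p.
Proof. intros Hw Huv He. subst w. unfold Rmin, Rmax in Hw. destruct Rle_dec; nra. Qed.

Lemma caseA_0 : a1 <> 0 -> a0 * (- b1 / a1) + b0 = 0 -> ~ has_center F ->
  (forall x y : R -> R,
      periodic_orbit F x -> periodic_orbit F y ->
      (exists t, 0 <= t <= 1 /\ x t <> 0) -> (exists t, 0 <= t <= 1 /\ y t <> 0) ->
      forall t, 0 <= t <= 1 -> x t = y t) /\
  (forall x : R -> R, periodic_orbit F x -> (exists t, 0 <= t <= 1 /\ x t <> 0) -> hyperbolic F (x 0)).
Proof.
  intros H1. set (xs := - b1 / a1). intros Hm Hnc.
  assert (HB' : forall t, B t = - A t * xs).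
  { intros t. unfold B, A, Af, xs. replace a2 with (-a1) by lra. replace b2 with (-b1) by lra.
    fold xs. replace b0 with (- (a0 * xs)) by lra. unfold xs. field. auto. }
  assert (HF : forall t u, F t u = A t * u^2 * (u - xs)) by (intros; rewrite F_AB, HB'; ring).
  destruct (HfA xs) as [Hf HHf].
  set (PA := Pf j k a0 a1 a2).
  assert (HK : forall x, is_solution F x -> (forall t, 0 <= t <= 1 -> x t <> 0) -> (forall t, 0 <= t <= 1 -> x t <> xs) ->
     Hf (x 1) - PA 1 = Hf (x 0) - PA 0).
  { intros x Hx Hnx Hax. apply (deriv_zero_const (fun s => Hf (x s) - PA s) (fun _ => 0) 0 1). lra.
    - intros s Hs.
      assert (H := comp_deriv _ x s _ _ (HHf (x s) (Hnx s Hs) (Hax s Hs)) (Hx s Hs)).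
      assert (H2 := is_derive_minus _ _ s _ _ H (Pf_deriv j k a0 a1 a2 s)).
      eapply is_derive_ext'; [| |apply H2]; intros; rsimpl. reflexivity.
      rewrite HF. fold A. specialize (Hnx s Hs). specialize (Hax s Hs). field. split; auto; lra.
    - intros; reflexivity. }
  assert (Hcs : is_solution F (fun _ => xs)) by (apply const_sol; intros; rewrite HF; ring).
  assert (Htouch : forall x, is_solution F x -> forall t, 0 <= t <= 1 -> x t = xs -> forall s, 0 <= s <= 1 -> x s = xs).
  { intros x Hx t Ht He s Hs. apply (uniqF x (fun _ => xs) t Hx Hcs Ht He s Hs). }
  destruct (Req_dec (PA 1) 0) as [HP|HP].
  - exfalso. apply Hnc.
    assert (Core : forall d0, 0 < d0 -> (xs <> 0 -> d0 <= Rabs xs) ->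
        forall z x, z <> 0 -> Rabs z < d0 -> is_solution F x -> x 0 = z -> x 1 = z).
    { intros d0 Hd0 Hd0x z x Hz Hzd Hx Hx0.
      assert (Hnx : forall t, 0 <= t <= 1 -> x t <> 0).
      { apply nonzero_orbit; auto. exists 0. split; [lra|]. rewrite Hx0; auto. }
      assert (Hax : forall t, 0 <= t <= 1 -> x t <> xs).
      { intros t Ht He. assert (H0 := Htouch x Hx t Ht He 0 ltac:(lra)). rewrite Hx0 in H0.
        destruct (Req_dec xs 0) as [Hxs|Hxs]. apply Hz; lra.
        specialize (Hd0x Hxs). rewrite H0 in Hzd. lra. }
      assert (HKx := HK x Hx Hnx Hax). unfold PA in HKx. rewrite Pf0 in HKx. fold PA in HKx. rewrite HP in HKx.
      assert (S1 := sign_const x (sol_cont F x Hx) Hnx).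
      assert (S2 := sign_const (fun s => x s - xs)).
      cbv beta in S2. specialize (S2 ltac:(intros t Ht; apply cplus; [apply (sol_cont F x Hx t Ht)|apply continuous_const])).
      specialize (S2 ltac:(intros t Ht; specialize (Hax t Ht); lra)).
      rewrite <- Hx0. destruct (Req_dec (x 1) (x 0)) as [|Hne]; auto. exfalso.
      destruct (MVT_gen Hf (x 0) (x 1) (fun w => 1 / (w^2 * (w - xs)))) as [c [Hc Heq]].
      + intros w Hw. apply HHf. apply (between_ne (x 0) (x 1)); [lra|]. nra.
        apply (between_ne (x 0) (x 1)); [lra|]. auto.
      + intros w Hw. eapply derive_contpt. apply HHf. apply (between_ne (x 0) (x 1)); [lra|]. nra.
        apply (between_ne (x 0) (x 1)); [lra|]. auto.
      + assert (c <> 0) by (apply (between_ne (x 0) (x 1)); [lra|]; nra).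
        assert (c <> xs) by (apply (between_ne (x 0) (x 1)); [lra|]; auto).
        assert (Hf (x 1) - Hf (x 0) = 0) by lra. rewrite H2 in Heq.
        symmetry in Heq. apply Rmult_integral in Heq. destruct Heq as [Heq|Heq].
        * apply div_zero_num in Heq. lra. apply Rmult_integral_contrapositive. split.
          apply pow_nonzero; auto. lra.
        * apply Hne. lra. }
    destruct (Req_dec xs 0) as [Hxs|Hxs].
    + apply (center_of 1); [lra|]. apply Core; [lra|]. intros; contradiction.
    + apply (center_of (Rabs xs)). apply Rabs_pos_lt; auto. apply Core. apply Rabs_pos_lt; auto. intros; lra.
  - assert (Horb : forall x, periodic_orbit F x -> (exists t, 0 <= t <= 1 /\ x t <> 0) -> forall t, 0 <= t <= 1 -> x t = xs).
    { intros x [Hx Hxp] Hxn. destruct (Classical_Prop.classic (exists t, 0 <= t <= 1 /\ x t = xs)) as [[t [Ht He]]|Hno].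
      - apply (Htouch x Hx t Ht He).
      - exfalso. assert (Hax : forall t, 0 <= t <= 1 -> x t <> xs) by (intros t Ht He; apply Hno; exists t; auto).
        assert (HKx := HK x Hx (nonzero_orbit x Hx Hxn) Hax). unfold PA in HKx. rewrite Pf0 in HKx. fold PA in HKx.
        rewrite Hxp in HKx. lra. }
    split.
    + intros x y Hxo Hyo Hxn Hyn t Ht. rewrite (Horb x Hxo Hxn t Ht), (Horb y Hyo Hyn t Ht). reflexivity.
    + intros x Hxo Hxn. assert (Hx := proj1 Hxo). assert (Hxs := Horb x Hxo Hxn).
      assert (Hxs0 : xs <> 0).
      { destruct Hxn as [t [Ht Hne]]. rewrite Hxs in Hne; auto. }
      apply hyp_of_I0; auto.
      assert (E : RInt (fun s => Dq s (x (clamp s)) (x (clamp s))) 0 1 - xs^2 * PA 1 = RInt (fun s => Dq s (x (clamp s)) (x (clamp s))) 0 0 - xs^2 * PA 0).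
      { apply (deriv_zero_const (fun t => RInt (fun s => Dq s (x (clamp s)) (x (clamp s))) 0 t - xs^2 * PA t) (fun _ => 0) 0 1). lra.
        - intros s Hs. assert (H2 := is_derive_minus _ _ s _ _ (rint_deriv x Hx s Hs) (is_derive_scal _ s (xs^2) _ (Pf_deriv j k a0 a1 a2 s))).
          eapply is_derive_ext'; [| |apply H2]; intros; rsimpl. reflexivity.
          rewrite Dq_AB, HB', (Hxs s Hs). fold A. ring.
        - intros; reflexivity. }
      rewrite RInt_point in E. unfold PA in E. rewrite Pf0 in E. fold PA in E. unfold zero in E; simpl in E.
      intros HI. rewrite HI in E. assert (xs^2 * PA 1 = 0) by lra. apply Rmult_integral in H. destruct H as [H|H]; [|contradiction].
      apply (pow_nonzero xs 2) in Hxs0. contradiction.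
Qed.

End Main.


Theorem corollary1p1 (j k : nat) (a0 a1 a2 b0 b1 b2 : R) :
  (0 < j)%nat -> (j < k)%nat ->
  a1 + a2 = 0 -> b1 + b2 = 0 ->
  ~ has_center (abel_rhs j k a0 a1 a2 b0 b1 b2) ->
  (* at most one non-zero periodic orbit *)
  (forall x y : R -> R,
      periodic_orbit (abel_rhs j k a0 a1 a2 b0 b1 b2) x ->
      periodic_orbit (abel_rhs j k a0 a1 a2 b0 b1 b2) y ->
      (exists t, 0 <= t <= 1 /\ x t <> 0) ->
      (exists t, 0 <= t <= 1 /\ y t <> 0) ->
      forall t, 0 <= t <= 1 -> x t = y t) /\
  (* and it is hyperbolic *)
  (forall x : R -> R,
      periodic_orbit (abel_rhs j k a0 a1 a2 b0 b1 b2) x ->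
      (exists t, 0 <= t <= 1 /\ x t <> 0) ->
      hyperbolic (abel_rhs j k a0 a1 a2 b0 b1 b2) (x 0)).
Proof.
  intros Hj Hjk Ha Hb Hnc.
  destruct (Req_dec a1 0) as [H1|H1].
  - destruct (Req_dec a0 0) as [H0|H0].
    + split.
      * intros xx yy Hxx Hyy Hxn Hyn. exfalso. apply (caseC2 j k a0 a1 a2 b0 b1 b2 Ha H0 H1 Hnc xx Hxx Hxn).
      * intros xx Hxx Hxn. exfalso. apply (caseC2 j k a0 a1 a2 b0 b1 b2 Ha H0 H1 Hnc xx Hxx Hxn).
    + exact (caseC1 j k a0 a1 a2 b0 b1 b2 Ha H1 H0).
  - destruct (Req_dec (a0 * (- b1 / a1) + b0) 0) as [Hm|Hm].
    + exact (caseA_0 j k a0 a1 a2 b0 b1 b2 Ha Hb H1 Hm Hnc).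
    + exact (caseA_m j k a0 a1 a2 b0 b1 b2 Ha Hb H1 Hm).
Qed.
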